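(* For $\alpha\ge0$ let $f(r^2)=1+\frac{r^2}{1+r^2}$, $q(u,v)=1+\alpha(\tfrac13u^2+\tfrac23v^2)$, $$a(u,v)=\frac{q(u,v)^2}{f(u^2+v^2)^2},\quad b(u,v)=\frac{q(u,v)^{5/2}}{f(u^2+v^2)^3},\quad \mathcal B(s,u,v)=1+u^2+v^2-a(u,v)s^2+b(u,v)s^3 .$$ Then for every $(u,v)\in\mathbb{R}^2$, as a function of $s$, $\mathcal B$ has a nondegenerate local maximum at $s=0$ with value $h(u,v)=1+u^2+v^2$, a local minimum at $s_m=\tfrac{2a}{3b}$ with value $\mathcal B(s_m,u,v)=1+u^2+v^2-\tfrac{4}{27}q(u,v)$, and returns to the value $h$ first at $s_b=a/b$ (with positive $s$-derivative there); the separatrix action is $$\jmath(u,v)=\int_0^{a/b}\sqrt{2(h(u,v)-\mathcal B(s,u,v))}\,ds=\frac{4\sqrt2\,a^{5/2}}{15\,b^2}=\frac{4\sqrt2}{15}f(u^2+v^2),$$ which depends only on $h$. Hence any divergence-free field realising $\mathcal B$ as its field strength in fieldline coordinates $(s,u,v)$ is weakly isodrastic, while for $\alpha\neq0$ the minimum value $\mathcal B(s_m,u,v)$ of the field strength along fieldlines is not constant on the level sets $\{h=\mathrm{const}\}$, so such a field is not omnigenous.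
   Context: Fieldline coordinates: $(u,v)$ label fieldlines and $s$ is signed arclength along them from the transverse surface $s=0$, which plays the role of $\Sigma^-$ (the set of nondegenerate local maxima of field strength along fieldlines). A field realising $\mathcal B$ is weakly isodrastic if the separatrix action $\jmath$ is constant on level sets of $h=|B|$ on $\Sigma^-$; omnigenity (for fields with flux function, here $h$) requires in particular that the minimum of $|B|$ along fieldlines be the same for all fieldlines of a flux surface. *)

(* Defs.v *)
From Stdlib Require Import Reals Lra.
From Coquelicot Require Import Coquelicot.
Open Scope R_scope.

(* f(r^2) = 1 + r^2/(1+r^2), as a function of t = r^2 *)
Definition fK (t : R) : R := 1 + t / (1 + t).

Definition qK (alpha u v : R) : R := 1 + alpha * (/3 * u^2 + 2/3 * v^2).

Definition aK (alpha u v : R) : R := (qK alpha u v)^2 / (fK (u^2 + v^2))^2.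

Definition bK (alpha u v : R) : R :=
  Rpower (qK alpha u v) (5/2) / (fK (u^2 + v^2))^3.

Definition BK (alpha s u v : R) : R :=
  1 + u^2 + v^2 - aK alpha u v * s^2 + bK alpha u v * s^3.

Definition hK (u v : R) : R := 1 + u^2 + v^2.

Definition s_min (alpha u v : R) : R := 2 * aK alpha u v / (3 * bK alpha u v).
Definition s_bounce (alpha u v : R) : R := aK alpha u v / bK alpha u v.

Definition jK (alpha u v : R) : R :=
  RInt (fun s => sqrt (2 * (hK u v - BK alpha s u v))) 0 (s_bounce alpha u v).

Definition Bmin (alpha u v : R) : R := BK alpha (s_min alpha u v) u v.

(* Main.v *)
Require Import Defs.
From Stdlib Require Import Reals Lra.
From Coquelicot Require Import Coquelicot.
Open Scope R_scope.

Lemma H_der t : 0 <= t -> is_derive (fun x => x * sqrt x) t (3/2 * sqrt t).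
Proof.
intros Ht. destruct (Rle_lt_or_eq_dec _ _ Ht) as [Hp|H0].
- auto_derive; [lra|]. 
  assert (Hs := sqrt_lt_R0 t Hp). assert (Hss := sqrt_sqrt t Ht).
  set (r := sqrt t) in *. rewrite <- Hss. field. lra.
- subst t. rewrite sqrt_0, Rmult_0_r. apply is_derive_Reals.
  intros eps Heps. exists (mkposreal (eps*eps) (Rmult_lt_0_compat _ _ Heps Heps)).
  intros h Hh0 Hh. simpl in Hh.
  replace ((0 + h) * sqrt (0 + h) - 0 * sqrt 0) with (h * sqrt h) by (rewrite Rplus_0_l; ring).
  replace (h * sqrt h / h - 0) with (sqrt h) by (field; auto).
  rewrite Rabs_right; [|apply Rle_ge, sqrt_pos].
  destruct (Rle_or_lt h 0) as [Hn|Hp].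
  + rewrite (sqrt_neg_0 h Hn); lra.
  + rewrite <- (sqrt_Rsqr eps) by lra. apply sqrt_lt_1; try lra.
    all: rewrite Rabs_right in Hh by lra; unfold Rsqr; lra.
Qed.

Definition Kf a t := (2*a/3) * (t * sqrt t) - (2/5) * (t * (t * sqrt t)).

Lemma K_der a t : 0 <= t -> is_derive (Kf a) t ((a - t) * sqrt t).
Proof.
intros Ht. unfold Kf.
assert (H1 := H_der t Ht).
assert (H2 := is_derive_scal _ _ (2*a/3) _ H1).
assert (H3 := is_derive_mult (fun x => x) (fun x => x * sqrt x) t 1 _ (is_derive_id t) H1 Rmult_comm).
assert (H4 := is_derive_scal _ _ (2/5) _ H3).
assert (H5 := is_derive_minus _ _ t _ _ H2 H4).
simpl in H5. unfold minus, plus, opp, mult in H5; simpl in H5.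
replace ((a - t) * sqrt t) with (2 * a / 3 * (3 / 2 * sqrt t) + - (2 / 5 * (1 * (t * sqrt t) + t * (3 / 2 * sqrt t)))) by field.
exact H5.
Qed.

Lemma integral_gen a b : 0 < a -> 0 < b ->
  is_RInt (fun s => sqrt (2*(a*s^2 - b*s^3))) 0 (a/b) (4 * sqrt 2 * (a^2 * sqrt a) / (15 * b^2)).
Proof.
intros Ha Hb.
set (F := fun s => sqrt 2 * (-(1/b^2)) * Kf a (a - b*s)).
assert (Hab : 0 < a/b) by (apply Rdiv_lt_0_compat; lra).
replace (4 * sqrt 2 * (a^2 * sqrt a) / (15 * b^2)) with (minus (F (a/b)) (F 0)).
2:{ unfold F, Kf, minus, plus, opp; simpl.
    replace (a - b*(a/b)) with 0 by (field; lra). rewrite sqrt_0.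
    replace (a - b*0) with a by ring. field. lra. }
apply (@is_RInt_derive R_CompleteNormedModule F).
- intros x Hx. rewrite Rmin_left in Hx by lra. rewrite Rmax_right in Hx by lra.
  assert (Ht : 0 <= a - b*x).
  { assert (b*x <= b*(a/b)) by (apply Rmult_le_compat_l; lra).
    replace (b*(a/b)) with a in H by (field; lra). lra. }
  unfold F.
  assert (HK := K_der a _ Ht).
  assert (Hg : is_derive (fun s => a - b*s) x (-b)) by (auto_derive; auto; ring).
  assert (HC := is_derive_comp (Kf a) _ x _ _ HK Hg).
  assert (HS := is_derive_scal _ x (sqrt 2 * (- (1 / b ^ 2))) _ HC).
  simpl in HS. unfold scal in HS; simpl in HS; unfold mult in HS; simpl in HS.
  replace (sqrt (2 * (a * x ^ 2 - b * x ^ 3))) with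
      (sqrt 2 * - (1 / b ^ 2) * (- b * ((a - (a - b * x)) * sqrt (a - b * x)))).
  exact HS.
  replace (2 * (a * x ^ 2 - b * x ^ 3)) with (x^2 * (2 * (a - b*x))) by ring.
  rewrite sqrt_mult; [|apply pow2_ge_0|lra].
  rewrite sqrt_pow2 by lra. rewrite sqrt_mult by lra. field. lra.
- intros x _. apply continuous_sqrt_comp.
  apply (@ex_derive_continuous R_AbsRing R_NormedModule). auto_derive. auto.
Qed.

Section Cubic.
Variables c a b : R.
Hypothesis Ha : 0 < a.
Hypothesis Hb : 0 < b.
Let B := fun s => c - a*s^2 + b*s^3.

Lemma cub_der s : is_derive B s (-2*a*s + 3*b*s^2).
Proof. unfold B. auto_derive; auto; ring. Qed.

Lemma cub_D2 : Derive_n B 2 0 = -2*a.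
Proof.
simpl. rewrite (Derive_ext _ (fun s => -2*a*s + 3*b*s^2)).
2:{ intros t. apply is_derive_unique, cub_der. }
apply is_derive_unique. auto_derive; auto; ring.
Qed.

Lemma cub_max : exists eps, 0 < eps /\ forall s, Rabs s < eps -> B s <= B 0.
Proof.
exists (a/b). split. apply Rdiv_lt_0_compat; lra.
intros s Hs. unfold B. assert (s < a/b) by (apply Rabs_def2 in Hs; lra).
assert (b*s < a). { apply (Rmult_lt_compat_l b) in H; [|lra].
  replace (b*(a/b)) with a in H by (field; lra). lra. }
assert (0 <= s^2) by apply pow2_ge_0. nra.
Qed.

Let sm := 2*a/(3*b).

Lemma cub_smval : B sm = c - 4/27 * (a^3/b^2).
Proof. unfold B, sm. field. lra. Qed.

Lemma cub_min : exists eps, 0 < eps /\ forall s, Rabs (s - sm) < eps -> B sm <= B s.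
Proof.
assert (Hsm : 0 < sm) by (unfold sm; apply Rdiv_lt_0_compat; lra).
exists sm. split; auto. intros s Hs. apply Rabs_def2 in Hs.
assert (E : B s - B sm = b * (s - sm)^2 * (s + sm/2)) by (unfold B, sm; field; lra).
assert (0 <= b * (s - sm)^2 * (s + sm/2)).
{ apply Rmult_le_pos; [apply Rmult_le_pos; [lra|apply pow2_ge_0]|lra]. }
lra.
Qed.

Lemma cub_bounce : B (a/b) = c.
Proof. unfold B. field. lra. Qed.

Lemma cub_below s : 0 < s < a/b -> B s < c.
Proof.
intros [H1 H2]. unfold B.
assert (b*s < a). { apply (Rmult_lt_compat_l b) in H2; [|lra].
  replace (b*(a/b)) with a in H2 by (field; lra). lra. }
assert (0 < s^2) by (apply pow_lt; lra). nra.
Qed.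

Lemma cub_bder : -2*a*(a/b) + 3*b*(a/b)^2 > 0.
Proof.
replace (-2*a*(a/b) + 3*b*(a/b)^2) with (a*a/b) by (field; lra).
apply Rdiv_lt_0_compat; nra.
Qed.

End Cubic.

Lemma rels alpha u v : 0 <= alpha ->
  let q := qK alpha u v in let f := fK (u^2+v^2) in let p := sqrt q in
  0 < p /\ 1 <= f /\ p^2 = q /\ aK alpha u v = p^4/f^2 /\ bK alpha u v = p^5/f^3 /\
  Rpower (aK alpha u v) (5/2) = aK alpha u v ^2 * (p^2/f).
Proof.
intros Hal q f p.
assert (Hq : 1 <= q).
{ unfold q, qK. assert (0 <= u^2) by apply pow2_ge_0.
  assert (0 <= v^2) by apply pow2_ge_0. nra. }
assert (Hf : 1 <= f).
{ unfold f, fK. assert (0 <= u^2 + v^2) by (assert (0 <= u^2) by apply pow2_ge_0;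
  assert (0 <= v^2) by apply pow2_ge_0; lra).
  assert (0 <= (u^2+v^2)/(1+(u^2+v^2))) by (apply Rdiv_le_0_compat; lra). lra. }
assert (Hp : 0 < p) by (apply sqrt_lt_R0; lra).
assert (Hp2 : p^2 = q) by (unfold p; simpl; rewrite Rmult_1_r; apply sqrt_sqrt; lra).
assert (HA : aK alpha u v = p^4/f^2) by (unfold aK; fold q f; rewrite <- Hp2; field; lra).
assert (HR : forall x, 0 < x -> Rpower x (5/2) = x^2 * sqrt x).
{ intros x Hx. replace (5/2) with (INR 2 + /2) by (simpl; field).
  rewrite Rpower_plus, Rpower_pow, Rpower_sqrt; auto. }
repeat split; auto.
- unfold bK. fold q f. rewrite HR by lra. fold p.
  rewrite <- Hp2. simpl. field. lra.
- rewrite HR. 2:{ rewrite HA. apply Rdiv_lt_0_compat; apply pow_lt; lra. }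
  f_equal. rewrite HA. replace (p^4/f^2) with ((p^2/f)^2) by (field; lra).
  apply sqrt_pow2. apply Rdiv_le_0_compat; [apply pow2_ge_0|lra].
Qed.

Theorem mainTheorem8 (alpha : R) (Halpha : 0 <= alpha) :
  (forall u v : R,
     (* nondegenerate local maximum at s = 0 with value h *)
     BK alpha 0 u v = hK u v /\
     is_derive (fun s => BK alpha s u v) 0 0 /\
     Derive_n (fun s => BK alpha s u v) 2 0 < 0 /\
     (exists eps : R, 0 < eps /\
        forall s, Rabs s < eps -> BK alpha s u v <= BK alpha 0 u v) /\
     (* local minimum at s_m = 2a/(3b) with value h - 4/27 q *)
     is_derive (fun s => BK alpha s u v) (s_min alpha u v) 0 /\
     (exists eps : R, 0 < eps /\
        forall s, Rabs (s - s_min alpha u v) < eps ->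
          BK alpha (s_min alpha u v) u v <= BK alpha s u v) /\
     BK alpha (s_min alpha u v) u v = hK u v - 4/27 * qK alpha u v /\
     (* first return to the value h at s_b = a/b, with positive derivative *)
     0 < s_bounce alpha u v /\
     BK alpha (s_bounce alpha u v) u v = hK u v /\
     (forall s, 0 < s < s_bounce alpha u v -> BK alpha s u v < hK u v) /\
     (exists d : R, is_derive (fun s => BK alpha s u v) (s_bounce alpha u v) d /\ 0 < d) /\
     (* separatrix action *)
     is_RInt (fun s => sqrt (2 * (hK u v - BK alpha s u v))) 0 (s_bounce alpha u v)
       (4 * sqrt 2 * Rpower (aK alpha u v) (5/2) / (15 * (bK alpha u v)^2)) /\
     4 * sqrt 2 * Rpower (aK alpha u v) (5/2) / (15 * (bK alpha u v)^2)
       = 4 * sqrt 2 / 15 * fK (u^2 + v^2) /\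
     jK alpha u v = 4 * sqrt 2 / 15 * fK (u^2 + v^2)) /\
  (* weakly isodrastic: j is constant on level sets of h *)
  (forall u v u' v' : R, hK u v = hK u' v' -> jK alpha u v = jK alpha u' v') /\
  (* not omnigenous for alpha <> 0: min of |B| along fieldlines is not
     constant on level sets of h *)
  (alpha <> 0 ->
     exists u v u' v' : R, hK u v = hK u' v' /\ Bmin alpha u v <> Bmin alpha u' v').
Proof.
assert (Main : forall u v,
     BK alpha 0 u v = hK u v /\
     is_derive (fun s => BK alpha s u v) 0 0 /\
     Derive_n (fun s => BK alpha s u v) 2 0 < 0 /\
     (exists eps : R, 0 < eps /\
        forall s, Rabs s < eps -> BK alpha s u v <= BK alpha 0 u v) /\
     is_derive (fun s => BK alpha s u v) (s_min alpha u v) 0 /\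
     (exists eps : R, 0 < eps /\
        forall s, Rabs (s - s_min alpha u v) < eps ->
          BK alpha (s_min alpha u v) u v <= BK alpha s u v) /\
     BK alpha (s_min alpha u v) u v = hK u v - 4/27 * qK alpha u v /\
     0 < s_bounce alpha u v /\
     BK alpha (s_bounce alpha u v) u v = hK u v /\
     (forall s, 0 < s < s_bounce alpha u v -> BK alpha s u v < hK u v) /\
     (exists d : R, is_derive (fun s => BK alpha s u v) (s_bounce alpha u v) d /\ 0 < d) /\
     is_RInt (fun s => sqrt (2 * (hK u v - BK alpha s u v))) 0 (s_bounce alpha u v)
       (4 * sqrt 2 * Rpower (aK alpha u v) (5/2) / (15 * (bK alpha u v)^2)) /\
     4 * sqrt 2 * Rpower (aK alpha u v) (5/2) / (15 * (bK alpha u v)^2)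
       = 4 * sqrt 2 / 15 * fK (u^2 + v^2) /\
     jK alpha u v = 4 * sqrt 2 / 15 * fK (u^2 + v^2)).
{ intros u v.
  destruct (rels alpha u v Halpha) as [Hp [Hf [Hp2 [HA [HB HR]]]]].
  set (p := sqrt (qK alpha u v)) in *. set (f := fK (u^2+v^2)) in *.
  set (A := aK alpha u v) in *. set (Bb := bK alpha u v) in *.
  assert (HAp : 0 < A) by (rewrite HA; apply Rdiv_lt_0_compat; apply pow_lt; lra).
  assert (HBp : 0 < Bb) by (rewrite HB; apply Rdiv_lt_0_compat; apply pow_lt; lra).
  set (c := hK u v).
  change (fun s => BK alpha s u v) with (fun s => c - A*s^2 + Bb*s^3).
  assert (EB : forall s, BK alpha s u v = c - A*s^2 + Bb*s^3) by reflexivity.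
  assert (Eq3 : A^3/Bb^2 = qK alpha u v).
  { rewrite <- Hp2, HA, HB. field. split; lra. }
  assert (Hint : is_RInt (fun s => sqrt (2 * (c - BK alpha s u v))) 0 (s_bounce alpha u v)
       (4 * sqrt 2 * Rpower A (5/2) / (15 * Bb^2))).
  { rewrite HR. unfold s_bounce. fold A Bb.
    replace (A ^ 2 * (p ^ 2 / f)) with (A^2 * sqrt A).
    2:{ f_equal. rewrite HA. replace (p^4/f^2) with ((p^2/f)^2) by (field; lra).
        apply sqrt_pow2. apply Rdiv_le_0_compat; [apply pow2_ge_0|lra]. }
    eapply is_RInt_ext; [|apply (integral_gen A Bb HAp HBp)].
    intros x _. rewrite EB. f_equal. f_equal. ring. }
  assert (Hval : 4 * sqrt 2 * Rpower A (5/2) / (15 * Bb^2) = 4 * sqrt 2 / 15 * f).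
  { rewrite HR, HA, HB. field. split; lra. }
  split. { rewrite EB. unfold c. ring. }
  split. { assert (H := cub_der c A Bb 0). replace (-2*A*0 + 3*Bb*0^2) with 0 in H by ring. exact H. }
  split. { rewrite cub_D2; lra. }
  split. { apply cub_max; auto. }
  split. { unfold s_min. fold A Bb. assert (H := cub_der c A Bb (2*A/(3*Bb))).
    replace (-2*A*(2*A/(3*Bb)) + 3*Bb*(2*A/(3*Bb))^2) with 0 in H by (field; lra). exact H. }
  split. { unfold s_min. fold A Bb. apply (cub_min c A Bb HAp HBp). }
  split. { unfold s_min. fold A Bb. rewrite EB.
    rewrite (cub_smval c A Bb HBp). rewrite Eq3. reflexivity. }
  split. { unfold s_bounce. fold A Bb. apply Rdiv_lt_0_compat; lra. }
  split. { unfold s_bounce. fold A Bb. rewrite EB. apply (cub_bounce c A Bb HBp). }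
  split. { intros s Hs. rewrite EB. unfold s_bounce in Hs. fold A Bb in Hs.
    apply (cub_below c A Bb HBp s Hs). }
  split. { exists (-2*A*(A/Bb) + 3*Bb*(A/Bb)^2). unfold s_bounce. fold A Bb. split.
    apply (cub_der c A Bb). apply (cub_bder A Bb HAp HBp). }
  split. { exact Hint. }
  split. { exact Hval. }
  { unfold jK. fold c. rewrite <- Hval. apply is_RInt_unique. exact Hint. } }
split; [exact Main|split].
- intros u v u' v' Hh.
  destruct (Main u v) as [_ [_ [_ [_ [_ [_ [_ [_ [_ [_ [_ [_ [_ J1]]]]]]]]]]]]].
  destruct (Main u' v') as [_ [_ [_ [_ [_ [_ [_ [_ [_ [_ [_ [_ [_ J2]]]]]]]]]]]]].
  rewrite J1, J2. unfold hK in Hh. replace (u'^2+v'^2) with (u^2+v^2) by lra. reflexivity.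
- intros Hne. exists 1, 0, 0, 1. split.
  + unfold hK. ring.
  + unfold Bmin.
    destruct (Main 1 0) as [_ [_ [_ [_ [_ [_ [M1 _]]]]]]].
    destruct (Main 0 1) as [_ [_ [_ [_ [_ [_ [M2 _]]]]]]].
    rewrite M1, M2. unfold hK, qK. intros E. apply Hne. nra.
Qed.
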